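(* Let $Q$ be a quiver with at least one end and $W$ a nonzero complex vector space. Then the set $\mathcal{R}^{ss}_W(Q)$ of semisimple representations is not dense in $\mathcal{R}_W(Q)$.
   Context: A quiver $Q=(Q_V,Q_A)$ is a finite directed graph; each arrow $a$ has head $h_a$ and tail $t_a$. A vertex is a sink if no arrow has it as tail, a source if no arrow has it as head; an end is a sink or a source. $\mathcal{R}_W(Q)=\bigoplus_{a\in Q_A}\mathrm{End}(W)$ is the space of (additive) quiver representations in $W$, with $G_W(Q)=\mathsf{GL}(W)^{Q_V}$ acting by $(g\cdot x)(a)=g_{h_a}x(a)g_{t_a}^{-1}$. A representation is semisimple if it is a direct sum of simple representations (those without proper nonzero subrepresentations); equivalently its $G_W(Q)$-orbit is closed. *)

(* Defs.v *)
From HB Require Import structures.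
From mathcomp Require Import all_boot all_order all_algebra.
Set Implicit Arguments. Unset Strict Implicit. Unset Printing Implicit Defensive.
Import Order.TTheory GRing.Theory Num.Theory.
Local Open Scope ring_scope.

(* W = C^n (column vectors); a representation x assigns to each arrow a an
   n x n matrix x a : W_(t a) -> W_(h a) acting on column vectors. *)

Definition is_sink (V A : finType) (h t : A -> V) (v : V) : bool :=
  [forall a, t a != v].
Definition is_source (V A : finType) (h t : A -> V) (v : V) : bool :=
  [forall a, h a != v].
Definition is_end (V A : finType) (h t : A -> V) (v : V) : bool :=
  is_sink h t v || is_source h t v.
Definition incident (V A : finType) (h t : A -> V) (v : V) : bool :=
  [exists a, (h a == v) || (t a == v)].

(* A subrepresentation of x: a family of subspaces U v of C^n (given as row
   spaces of matrices; a column vector w lies in U v iff w^T is in the row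
   space) with x(a) U_(t a) <= U_(h a). *)
Definition subrep (C : fieldType) (n : nat) (V A : finType) (h t : A -> V)
    (x : A -> 'M[C]_n) (U : V -> 'M[C]_n) : Prop :=
  forall a, (U (t a) *m (x a)^T <= U (h a))%MS.

Definition subrep_le (C : fieldType) (n : nat) (V : finType)
    (U1 U2 : V -> 'M[C]_n) : Prop := forall v, (U1 v <= U2 v)%MS.

Definition subrep_zero (C : fieldType) (n : nat) (V : finType)
    (U : V -> 'M[C]_n) : Prop := forall v, U v = 0.

Definition simple_subrep (C : fieldType) (n : nat) (V A : finType)
    (h t : A -> V) (x : A -> 'M[C]_n) (U : V -> 'M[C]_n) : Prop :=
  [/\ subrep h t x U, ~ subrep_zero U &
      forall U', subrep h t x U' -> subrep_le U' U ->
        subrep_zero U' \/ subrep_le U U'].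

Definition semisimple (C : fieldType) (n : nat) (V A : finType)
    (h t : A -> V) (x : A -> 'M[C]_n) : Prop :=
  exists (k : nat) (Us : 'I_k -> V -> 'M[C]_n),
    (forall i, simple_subrep h t x (Us i)) /\
    (forall v, mxdirect (\sum_i Us i v)%MS /\ ((\sum_i Us i v)%MS == 1%:M)%MS).

Inductive polyfun (C : fieldType) (n : nat) (A : finType)
    : ((A -> 'M[C]_n) -> C) -> Prop :=
| pf_const (c : C) : polyfun (fun _ => c)
| pf_coord (a : A) (i j : 'I_n) : polyfun (fun x => x a i j)
| pf_add f g : polyfun f -> polyfun g -> polyfun (fun x => f x + g x)
| pf_mul f g : polyfun f -> polyfun g -> polyfun (fun x => f x * g x).

Definition zariski_dense (C : fieldType) (n : nat) (A : finType)
    (S : (A -> 'M[C]_n) -> Prop) : Prop :=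
  forall f, polyfun f -> (forall x, S x -> f x = 0) -> forall x, f x = 0.

(* Main.v *)
Require Import Defs.
From HB Require Import structures.
From mathcomp Require Import all_boot all_order all_algebra.
Local Open Scope ring_scope.

Lemma key (C : fieldType) (n : nat) (V A : finType) (h t : A -> V)
  (x : A -> 'M[C]_n) (a0 : A) :
  (forall U, simple_subrep h t x U -> U (t a0) = 0 \/ U (h a0) = 0) ->
  semisimple h t x -> x a0 = 0.
Proof.
move=> H [k [Us [Hs Hd]]].
have [_ /andP [_ H1]] := Hd (t a0).
have Hk : (1%:M <= kermx (x a0)^T)%MS.
  apply: submx_trans H1 _.
  apply/sumsmx_subP => i _; rewrite sub_kermx.
  have [Hsub _ _] := Hs i.
  case: (H _ (Hs i)) => E; first by rewrite E mul0mx.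
  by have := Hsub a0; rewrite E submx0.
move: Hk; rewrite sub_kermx mul1mx => /eqP XT0.
by rewrite -[x a0]trmxK XT0 trmx0.
Qed.

Theorem corollary5p7 (C : numClosedFieldType) (V A : finType) (h t : A -> V)
    (n : nat) :
  (exists v : V, is_end h t v && incident h t v) ->
  (0 < n)%N ->
  ~ zariski_dense (fun x : A -> 'M[C]_n => semisimple h t x).
Proof.
move=> [v /andP [Hend /existsP [a0 Hinc]]] Hn Hd.
have Hzero : forall x : A -> 'M[C]_n, semisimple h t x -> x a0 = 0.
  move=> x; apply: key => U [Hsub Hnz Hmin].
  case/orP: Hend => [/forallP Hs | /forallP Hs].
  - have Ht : forall a, t a != v by [].
    have Eh : h a0 = v.
      by case/orP: Hinc => /eqP // E; move: (Ht a0); rewrite E eqxx.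
    pose U' := fun w => if w == v then U v else 0.
    have HU' : subrep h t x U'.
      by move=> a; rewrite /U' (negbTE (Ht a)) mul0mx sub0mx.
    have Hle : subrep_le U' U.
      by move=> w; rewrite /U'; case: eqP => [->|_]; rewrite ?submx_refl ?sub0mx.
    case: (Hmin U' HU' Hle) => [Z | L].
    + by right; rewrite Eh; have := Z v; rewrite /U' eqxx.
    + left; have := L (t a0); rewrite /U' (negbTE (Ht a0)) submx0 => /eqP //.
  - have Hh : forall a, h a != v by [].
    have Et : t a0 = v.
      by case/orP: Hinc => /eqP // E; move: (Hh a0); rewrite E eqxx.
    pose U' := fun w => if w == v then 0 else U w.
    have HU' : subrep h t x U'.
      move=> a; rewrite /U' (negbTE (Hh a)).
      by case: eqP => _; rewrite ?mul0mx ?sub0mx ?Hsub.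
    have Hle : subrep_le U' U.
      by move=> w; rewrite /U'; case: eqP => _; rewrite ?submx_refl ?sub0mx.
    case: (Hmin U' HU' Hle) => [Z | L].
    + by right; have := Z (h a0); rewrite /U' (negbTE (Hh a0)).
    + left; have := L (t a0); rewrite /U' Et eqxx submx0 => /eqP //.
pose i0 := Ordinal Hn.
have Hv : forall x : A -> 'M[C]_n, semisimple h t x -> x a0 i0 i0 = 0.
  by move=> x Hx; rewrite (Hzero x Hx) mxE.
have := Hd (fun x => x a0 i0 i0) (pf_coord _ a0 i0 i0) Hv (fun _ => 1%:M).
by rewrite mxE eqxx /= => /eqP; rewrite GRing.oner_eq0.
Qed.
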